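(* Let $m\geq1$, let $X$ be a weak complicial set in which every $k$-simplex is thin for every $k\geq m$, and let $x\in X_0$ be a vertex. Then for every $n\geq m$ the homotopy monoid $\tau_n(X,x)$ is a group.
   Context: A stratified simplicial set is a pair $(X,tX)$ where $X$ is a simplicial set and $tX$ is a set of simplices of $X$ (thin simplices) containing all degenerate simplices and no $0$-simplices; stratified maps are simplicial maps preserving thin simplices. A regular stratified subset $(X,tX)\subset(Y,tY)$ means $X\subset Y$, $tX=X\cap tY$. For $n\ge1$, $\Delta[n]_t$ is $\Delta[n]$ with thin simplices the degenerate ones and $\mathrm{Id}_{[n]}$. For $k\in[n]$, $\Delta^k[n]$ is $\Delta[n]$ with thin simplices the degenerate ones and all $\alpha:[m]\to[n]$ with $\{k-1,k,k+1\}\cap[n]\subset\mathrm{Im}(\alpha)$; $\Lambda^k[n]$ is the regular stratified subset of $\Delta^k[n]$ generated by the faces $\delta_i$, $i\neq k$; $\Delta^k[n]''$ (resp. $\Lambda^k[n]'$) is $\Delta^k[n]$ (resp. $\Lambda^k[n]$) with additionally all its $(n-1)$-simplices thin; $\Delta^k[n]'=\Delta^k[n]\cup\Lambda^k[n]'$. A weak complicial set is a stratified simplicial set with the right lifting property against $\Lambda^k[n]\hookrightarrow\Delta^k[n]$ ($n\ge1$, $k\in[n]$) and $\Delta^k[n]'\hookrightarrow\Delta^k[n]''$ ($n\ge2$, $k\in[n]$). The product $X\circledast Y$ has underlying simplicial set $X\times Y$, with $(x,y)$ thin iff $x$ and $y$ are thin. For stratified maps $f,g:A\to X$ and an inclusion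 $B\hookrightarrow A$ with $f|_B=g|_B$, $f\sim_B g$ means there is a stratified map $H:A\circledast\Delta[1]_t\to X$ with $H|_{A\times\{0\}}=f$, $H|_{A\times\{1\}}=g$ and $H|_{B\circledast\Delta[1]_t}=f|_B\circ\mathrm{proj}_B$; $n$-simplices are regarded as stratified maps from $\Delta[n]$ with only degenerate simplices thin. For $n\ge1$, $\tau_n(X,x)$ is the set of $\sim_{\partial\Delta[n]}$-classes of $n$-simplices $\alpha$ whose restriction to $\partial\Delta[n]$ is constant at $x$, with multiplication $[\alpha][\beta]=[d_n\theta]$ where $\theta:\Delta^n[n+1]\to X$ is any stratified map with $d_{n-1}\theta=\alpha$, $d_{n+1}\theta=\beta$, and $d_i\theta$ constant at $x$ for $i\notin\{n-1,n,n+1\}$; this is a monoid with unit the class of the constant simplex at $x$. *)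

(* Defs.v *)
From Stdlib Require Import Relations.Relation_Operators.
From mathcomp Require Import all_boot.
From mathcomp Require Import zify.

Set Implicit Arguments.
Unset Strict Implicit.
Unset Printing Implicit Defensive.

Definition monob m n (f : {ffun 'I_m.+1 -> 'I_n.+1}) : bool :=
  [forall i : 'I_m.+1, forall j : 'I_m.+1, (i <= j) ==> (f i <= f j)].

Definition Mon m n := {f : {ffun 'I_m.+1 -> 'I_n.+1} | monob f}.

Definition monf m n (a : Mon m n) : 'I_m.+1 -> 'I_n.+1 := fun i => sval a i.

Lemma monoP m n (f : {ffun 'I_m.+1 -> 'I_n.+1}) :
  monob f -> forall i j : 'I_m.+1, i <= j -> f i <= f j.
Proof. by move=> /forallP H i j hij; move: (H i) => /forallP /(_ j) /implyP; apply. Qed.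

Lemma mon_comp_proof m n p (b : Mon n p) (a : Mon m n) :
  monob [ffun i => sval b (sval a i)].
Proof.
apply/forallP => i; apply/forallP => j; apply/implyP => hij; rewrite !ffunE.
by apply: (monoP (proj2_sig b)); apply: (monoP (proj2_sig a)).
Qed.

Definition mon_comp m n p (b : Mon n p) (a : Mon m n) : Mon m p :=
  exist _ [ffun i => sval b (sval a i)] (mon_comp_proof b a).

Lemma constMon_proof m n (j : 'I_n.+1) : monob [ffun _ : 'I_m.+1 => j].
Proof. by apply/forallP => i; apply/forallP => k; rewrite !ffunE leqnn implybT. Qed.

Definition constMon m n (j : 'I_n.+1) : Mon m n :=
  exist _ [ffun _ => j] (constMon_proof m j).

Lemma faceMon_proof n (i : 'I_n.+2) : monob [ffun j : 'I_n.+1 => lift i j].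
Proof.
apply/forallP => j; apply/forallP => k; apply/implyP => hjk; rewrite !ffunE /=.
rewrite /bump; case: (leqP i j) => h1; case: (leqP i k) => h2 /=; lia.
Qed.

Definition faceMon n (i : 'I_n.+2) : Mon n n.+1 :=
  exist _ [ffun j => lift i j] (faceMon_proof i).

Record sSet := { sobj :> nat -> Type;
                 sact : forall m n, Mon m n -> sobj n -> sobj m }.
Arguments sact {s m n}.

Record ssSet := { sbase :> sSet; sthin : forall m, sbase m -> Prop }.
Arguments sthin {s m}.

Lemma idMon_proof n : monob [ffun i : 'I_n.+1 => i].
Proof. by apply/forallP => i; apply/forallP => j; rewrite !ffunE; apply/implyP. Qed.

Definition idMon n : Mon n n := exist _ [ffun i => i] (idMon_proof n).

Definition is_simplicial (X : sSet) : Prop :=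
  (forall n (x : X n), sact (idMon n) x = x) /\
  (forall m n p (a : Mon m n) (b : Mon n p) (x : X p),
      sact (mon_comp b a) x = sact a (sact b x)).

Definition degenerate (X : sSet) m (x : X m) : Prop :=
  exists k (s : Mon m k) (y : X k), k < m /\ x = sact s y.

Definition is_strat (X : ssSet) : Prop :=
  [/\ is_simplicial X,
      (forall m (x : X m), degenerate x -> sthin x) &
      (forall x : X 0, ~ sthin x)].

Definition is_smap (A B : ssSet) (f : forall m, A m -> B m) : Prop :=
  (forall m n (a : Mon m n) (y : A n), f m (sact a y) = sact a (f n y)) /\
  (forall m (y : A m), sthin y -> sthin (f m y)).
Arguments is_smap : clear implicits.

Definition RLP (A B : ssSet) (i : forall m, A m -> B m) (X : ssSet) : Prop :=
  forall f, is_smap A X f ->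
    exists g, is_smap B X g /\ forall m (y : A m), g m (i m y) = f m y.

Definition subSS (A : ssSet) (P : forall m, A m -> Prop)
  (HP : forall m n (a : Mon m n) (y : A n), P n y -> P m (sact a y)) : ssSet :=
  {| sbase := {| sobj := fun m => {y : A m | P m y};
                 sact := fun m n a y => exist _ (sact a (sval y)) (HP m n a (sval y) (proj2_sig y)) |};
     sthin := fun m y => sthin (sval y) |}.

Definition prodSS (A B : ssSet) : ssSet :=
  {| sbase := {| sobj := fun m => (A m * B m)%type;
                 sact := fun m n a y => (sact a y.1, sact a y.2) |};
     sthin := fun m y => sthin y.1 /\ sthin y.2 |}.

Definition DeltaS n : sSet :=
  {| sobj := fun m => Mon m n; sact := fun m p (a : Mon m p) (b : Mon p n) => mon_comp b a |}.

Definition Delta_deg n : ssSet :=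
  {| sbase := DeltaS n; sthin := fun m a => degenerate (X := DeltaS n) a |}.

Definition Delta_t n : ssSet :=
  {| sbase := DeltaS n;
     sthin := fun m a => degenerate (X := DeltaS n) a \/
                         (m = n /\ forall i : 'I_m.+1, val (monf a i) = val i) |}.

(* {k-1,k,k+1} /\ [n] is contained in the image of a *)
Definition kthin n k m (a : Mon m n) : Prop :=
  forall j : 'I_n.+1, k <= j.+1 -> j <= k.+1 -> exists i, monf a i = j.

Definition DeltaK n k : ssSet :=
  {| sbase := DeltaS n;
     sthin := fun m a => degenerate (X := DeltaS n) a \/ kthin k a |}.

(* a factors through some face delta_i with i <> k *)
Definition horn n k m (a : Mon m n) : Prop :=
  exists i : 'I_n.+1, val i != k /\ forall j, monf a j != i.

(* a factors through some face delta_i *)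
Definition bdry n m (a : Mon m n) : Prop :=
  exists i : 'I_n.+1, forall j, monf a j != i.

Lemma horn_closed n k m p (a : Mon m p) (y : Mon p n) :
  horn k y -> horn k (mon_comp y a).
Proof. by case=> i [hi hj]; exists i; split=> // j; rewrite /monf /= ffunE; apply: hj. Qed.

Lemma bdry_closed n m p (a : Mon m p) (y : Mon p n) :
  bdry y -> bdry (mon_comp y a).
Proof. by case=> i hj; exists i => j; rewrite /monf /= ffunE; apply: hj. Qed.

Definition Horn n k : ssSet :=
  subSS (P := fun m (y : DeltaK n k m) => horn k y) (fun m p a y => @horn_closed n k m p a y).

Definition horn_incl n k : forall m, Horn n k m -> DeltaK n k m := fun m y => sval y.

Definition Bdry n : ssSet :=
  subSS (P := fun m (y : Delta_deg n m) => bdry y) (fun m p a y => @bdry_closed n m p a y).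

Definition DeltaK' n k : ssSet :=
  {| sbase := DeltaS n;
     sthin := fun m a => sthin (s := DeltaK n k) a \/ (m = n.-1 /\ horn k a) |}.

Definition DeltaK'' n k : ssSet :=
  {| sbase := DeltaS n;
     sthin := fun m a => sthin (s := DeltaK n k) a \/ m = n.-1 |}.

Definition weak_complicial (X : ssSet) : Prop :=
  (forall n k, 1 <= n -> k <= n -> RLP (@horn_incl n k) X) /\
  (forall n k, 2 <= n -> k <= n ->
     RLP (A := DeltaK' n k) (B := DeltaK'' n k) (fun m y => y) X).

(* an n-simplex, regarded as a (stratified) map from Delta[n] *)
Definition simplex (X : ssSet) n := forall m, Mon m n -> X m.

Definition cst (X : ssSet) (x : X 0) m : X m := sact (constMon m (ord0 : 'I_1)) x.

Definition sphere (X : ssSet) n (x : X 0) (a : simplex X n) : Prop :=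
  is_smap (Delta_deg n) X a /\ forall m (b : Mon m n), bdry b -> a m b = cst x m.

Definition htpy (X : ssSet) n (f g : simplex X n) : Prop :=
  exists H : forall m, prodSS (Delta_deg n) (Delta_t 1) m -> X m,
    [/\ is_smap _ _ H,
        (forall m (a : Mon m n), H m (a, constMon m (ord0 : 'I_2)) = f m a),
        (forall m (a : Mon m n), H m (a, constMon m (ord_max : 'I_2)) = g m a) &
        (forall m (a : Mon m n) (t : Mon m 1), bdry a -> H m (a, t) = f m a)].

Definition hrel (X : ssSet) n (x : X 0) (f g : simplex X n) : Prop :=
  [/\ sphere x f, sphere x g & htpy f g].

(* equality of classes in tau_n(X,x): the equivalence relation generated by ~ *)
Definition hequiv (X : ssSet) n (x : X 0) : simplex X n -> simplex X n -> Prop :=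
  clos_refl_sym_trans _ (@hrel X n x).

Definition face (X : ssSet) n (th : simplex X n.+1) (i : nat) : simplex X n :=
  fun m b => th m (mon_comp (faceMon (inord i : 'I_n.+2)) b).
Arguments face {X n}.

(* [a][b] = [c] in tau_n(X,x) *)
Definition tau_mul_eq (X : ssSet) n (x : X 0) (a b c : simplex X n) : Prop :=
  exists th : simplex X n.+1,
    [/\ is_smap (DeltaK n.+1 n) X th,
        (forall m y, face th n.-1 m y = a m y),
        (forall m y, face th n.+1 m y = b m y),
        (forall i, i <= n.+1 -> i \notin [:: n.-1; n; n.+1] ->
             forall m y, face th i m y = cst x m) &
        hequiv x (face th n) c].

Definition tau_unit (X : ssSet) n (x : X 0) : simplex X n := fun m _ => cst x m.

(* tau_n(X,x) is a group: every class has a two-sided inverse *)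
Definition tau_is_group (X : ssSet) (n : nat) (x : X 0) : Prop :=
  forall a : simplex X n, sphere x a ->
    exists b : simplex X n,
      [/\ sphere x b, tau_mul_eq x a b (tau_unit x) & tau_mul_eq x b a (tau_unit x)].
Arguments tau_is_group {X} n x.

(* Main.v *)
Require Import Defs.
From mathcomp Require Import all_boot zify.
From Stdlib Require Import FunctionalExtensionality Relations.Relation_Operators.
Set Implicit Arguments. Unset Strict Implicit. Unset Printing Implicit Defensive.

Lemma mon_ext m n (a b : Mon m n) : (forall i, nat_of_ord (monf a i) = nat_of_ord (monf b i)) -> a = b.
Proof. move=> H; apply: val_inj; apply/ffunP => i; apply: val_inj; exact: H. Qed.

Lemma compE m n p (b : Mon n p) (a : Mon m n) i : nat_of_ord (monf (mon_comp b a) i) = nat_of_ord (monf b (monf a i)).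
Proof. by rewrite /monf /= ffunE. Qed.

Lemma compE' m n p (b : Mon n p) (a : Mon m n) i : monf (mon_comp b a) i = monf b (monf a i).
Proof. by rewrite /monf /= ffunE. Qed.

Lemma faceE n (i : 'I_n.+2) j : nat_of_ord (monf (faceMon i) j) = bump i j.
Proof. by rewrite /monf /= ffunE. Qed.

Lemma constE m n (j : 'I_n.+1) i : nat_of_ord (monf (constMon m j) i) = j.
Proof. by rewrite /monf /= ffunE. Qed.

Definition gmon m n (g : nat -> nat) : Mon m n :=
  insubd (constMon m ord0) [ffun i : 'I_m.+1 => (inord (g i) : 'I_n.+1)].

Lemma gmonE m n g : (forall i, i <= m -> g i <= n) ->
  (forall i j, i <= j -> j <= m -> g i <= g j) ->
  forall i : 'I_m.+1, nat_of_ord (monf (gmon m n g) i) = g i.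
Proof.
move=> Hb Hm i.
have Hb' : forall i : 'I_m.+1, g i < n.+1.
  move=> i0; rewrite ltnS; apply: Hb; have := ltn_ord i0; lia.
have Hmon : monob [ffun i : 'I_m.+1 => (inord (g i) : 'I_n.+1)].
  apply/forallP => i1; apply/forallP => j1; apply/implyP => h; rewrite !ffunE.
  rewrite /= (inordK (Hb' i1)) (inordK (Hb' j1)); apply: Hm => //; have := ltn_ord j1; lia.
by rewrite /monf /gmon val_insubd Hmon ffunE /= (inordK (Hb' i)).
Qed.

Lemma inordV N v : v <= N -> nat_of_ord (inord v : 'I_N.+1) = v.
Proof. by move=> h; apply: inordK. Qed.

Lemma inordW N v : v <= N -> val (inord v : 'I_N.+1) = v.
Proof. by move=> h; apply: inordK. Qed.

Definition miss d N (z : Mon d N) (v : nat) : bool := [forall j, nat_of_ord (monf z j) != v].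

Lemma missP d N (z : Mon d N) v : miss z v -> forall j, nat_of_ord (monf z j) != v.
Proof. by move/forallP. Qed.

Lemma missI d N (z : Mon d N) v : (forall j, nat_of_ord (monf z j) != v) -> miss z v.
Proof. by move=> H; apply/forallP. Qed.

Lemma hornI d N k (z : Mon d N) v : v <= N -> v != k -> miss z v -> horn k z.
Proof.
move=> hv hk hm; exists (inord v); rewrite inordW //; split => // j.
apply/negP => /eqP/(congr1 val); rewrite inordW // => E.
by move: (missP hm j); rewrite E eqxx.
Qed.

Lemma hornE d N k (z : Mon d N) : horn k z -> exists v, [/\ v <= N, v != k & miss z v].
Proof.
case=> i [hi hj]; exists (nat_of_ord i); split => //; first by have := ltn_ord i; lia.
apply: missI => j; apply/negP => /eqP E.
by move: (hj j); rewrite (_ : monf z j = i) ?eqxx //; apply: val_inj.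
Qed.

Lemma bdryI d N (z : Mon d N) v : v <= N -> miss z v -> bdry z.
Proof.
move=> hv hm; exists (inord v) => j.
apply/negP => /eqP/(congr1 val); rewrite inordW // => E.
by move: (missP hm j); rewrite E eqxx.
Qed.

Lemma exists_miss2 d N (z : Mon d N) k : d.+1 < N -> exists v, [/\ v <= N, v != k & miss z v].
Proof.
move=> hd.
case: (boolP [exists v : 'I_N.+1, (nat_of_ord v != k) && miss z v]).
  by case/existsP => v /andP[h1 h2]; exists v; split => //; rewrite -ltnS.
move=> H; exfalso.
pose k0 : 'I_N.+1 := inord k.
have Hk : forall j : 'I_N, nat_of_ord (lift k0 j) != k.
  move=> j; case: (leqP k N) => hk.
    have := neq_lift k0 j; apply: contra => /eqP E; apply/eqP; apply: ord_inj.
    by rewrite E inordV.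
  apply/negP => /eqP E; have := ltn_ord (lift k0 j); rewrite E; lia.
have Hhit : forall j : 'I_N, exists i, monf z i == lift k0 j.
  move=> j; move: H; rewrite negb_exists => /forallP /(_ (lift k0 j)).
  rewrite negb_and Hk /= => /negP hm.
  case: (boolP [exists i, monf z i == lift k0 j]) => [/existsP // | H'].
  exfalso; apply: hm; apply: missI => i; apply/negP => /eqP E.
  move: H'; rewrite negb_exists => /forallP /(_ i); rewrite (_ : monf z i = lift k0 j) ?eqxx //.
  by apply: val_inj.
pose h (j : 'I_N) : 'I_d.+1 := odflt ord0 [pick i | monf z i == lift k0 j].
have hinj : injective h.
  move=> j1 j2; rewrite /h.
  case: pickP => [i1 /eqP e1|H1]; last by case: (Hhit j1) => i; rewrite H1.
  case: pickP => [i2 /eqP e2|H2]; last by case: (Hhit j2) => i; rewrite H2.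
  by move=> /= E; subst; apply: (lift_inj (h := k0)); rewrite -e1 -e2.
have := @leq_card _ _ h hinj; rewrite !card_ord; lia.
Qed.

Lemma exists_miss d N (z : Mon d N) : d < N -> exists v, v <= N /\ miss z v.
Proof.
move=> hd.
case: (boolP [exists v : 'I_N.+1, miss z v]).
  by case/existsP => v h; exists v; split => //; rewrite -ltnS.
move=> H; exfalso.
have Hhit : forall j : 'I_N.+1, exists i, monf z i == j.
  move=> j; move: H; rewrite negb_exists => /forallP /(_ j) /negP hm.
  case: (boolP [exists i, monf z i == j]) => [/existsP // | H'].
  exfalso; apply: hm; apply: missI => i; apply/negP => /eqP E.
  move: H'; rewrite negb_exists => /forallP /(_ i); rewrite (_ : monf z i = j) ?eqxx //.
  by apply: val_inj.
pose h (j : 'I_N.+1) : 'I_d.+1 := odflt ord0 [pick i | monf z i == j].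
have hinj : injective h.
  move=> j1 j2; rewrite /h.
  case: pickP => [i1 /eqP e1|H1]; last by case: (Hhit j1) => i; rewrite H1.
  case: pickP => [i2 /eqP e2|H2]; last by case: (Hhit j2) => i; rewrite H2.
  by move=> /= E; rewrite -e1 -e2 E.
have := @leq_card _ _ h hinj; rewrite !card_ord; lia.
Qed.

Lemma cst_nat (X : ssSet) (x : X 0) d e (al : Mon e d) :
  is_simplicial X -> sact al (cst x d) = cst x e.
Proof.
case=> _ H2; rewrite /cst -H2; congr sact; apply: mon_ext => i.
by rewrite compE !constE.
Qed.

Lemma cst_thin (X : ssSet) (x : X 0) d : is_strat X -> 0 < d -> sthin (cst x d).
Proof. by case=> _ H _ hd; apply: H; exists 0, (constMon d ord0), x. Qed.

Lemma deg_pos (S : sSet) d (y : S d) : degenerate y -> 0 < d.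
Proof. by case=> k [s [y' [h _]]]; lia. Qed.

Lemma noThin0 N k (a : Mon 0 N) : 0 < N -> k <= N ->
  ~ (degenerate (X := DeltaS N) a \/ kthin k a).
Proof.
move=> hN hk [/deg_pos //|H].
have [j1 [j2 [h1 h2 h3 h4 h5]]] : exists j1 j2, [/\ j1 <= N, j2 <= N, j1 != j2,
   k <= j1.+1 /\ j1 <= k.+1 & k <= j2.+1 /\ j2 <= k.+1].
  case: (ltnP k N) => hk'.
    exists k, k.+1; split => //; lia.
  exists k.-1, k; split => //; lia.
have [i1 e1] := H (inord j1) (ltac:(rewrite inordV //; lia)) (ltac:(rewrite inordV //; lia)).
have [i2 e2] := H (inord j2) (ltac:(rewrite inordV //; lia)) (ltac:(rewrite inordV //; lia)).
have E : i1 = i2 by apply: ord_inj; have := ltn_ord i1; have := ltn_ord i2; lia.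
move: e1 e2; rewrite E => -> /(congr1 (@nat_of_ord _)); rewrite !inordV //.
by move/eqP; rewrite (negbTE h3).
Qed.

Definition natural (X : ssSet) N (s : simplex X N) : Prop :=
  forall d e (al : Mon e d) (w : Mon d N), s e (mon_comp w al) = sact al (s d w).

Lemma sphere_cst (X : ssSet) n (x : X 0) (a : simplex X n) d (w : Mon d n) :
  sphere x a -> d < n -> a d w = cst x d.
Proof.
case=> _ H hd; apply: H; have [v [hv hm]] := exists_miss w hd; exact: bdryI hv hm.
Qed.

Lemma fill (X : ssSet) (x : X 0) (mm n N k : nat) (f : simplex X N) :
  is_strat X -> weak_complicial X -> (forall d (s : X d), mm <= d -> sthin s) ->
  1 <= mm -> mm <= n -> n < N -> k <= N ->
  (forall d e (al : Mon e d) (z : Mon d N), horn k z -> f e (mon_comp z al) = sact al (f d z)) ->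
  (forall d (z : Mon d N), d < n -> f d z = cst x d) ->
  exists g : simplex X N, [/\ natural g, (forall d z, horn k z -> g d z = f d z)
                             & (forall d z, d < n -> g d z = cst x d)].
Proof.
move=> hX [hW _] hthin h1 h2 h3 hk fnat fcst.
have := hW N k (ltac:(lia)) hk (fun d (y : Horn N k d) => f d (sval y)).
case.
  split.
    move=> d e al y; exact: (fnat _ _ _ _ (proj2_sig y)).
  move=> d y hy; case: (leqP mm d) => hd; first exact: hthin.
  rewrite fcst; last lia.
  apply: cst_thin => //; case: d y hy hd => // y hy _.
  by case: (noThin0 (ltac:(lia) : 0 < N) hk hy).
move=> g [[gnat _] gext]; exists g; split.
- move=> d e al w; exact: gnat.
- move=> d z hz; exact: (gext d (exist _ z hz)).
- move=> d z hd; have [v [hv hvk hm]] := @exists_miss2 _ _ z k (ltac:(lia) : d.+1 < N).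
  rewrite (gext d (exist _ z (hornI hv hvk hm))); exact: fcst.
Qed.

Lemma comp_assoc m n p q (c : Mon p q) (b : Mon n p) (a : Mon m n) :
  mon_comp c (mon_comp b a) = mon_comp (mon_comp c b) a.
Proof. by apply: mon_ext => i; rewrite !compE'. Qed.

Lemma faceIE n i (j : 'I_n.+1) : i <= n.+1 ->
  nat_of_ord (monf (faceMon (inord i : 'I_n.+2)) j) = bump i j.
Proof. by move=> h; rewrite faceE inordV. Qed.

Definition sigm n : Mon n.+1 n := gmon n.+1 n (fun j => j - (n.-1 < j)).

Lemma sigmE n (j : 'I_n.+2) : nat_of_ord (monf (sigm n) j) = j - (n.-1 < j).
Proof. by rewrite gmonE // => *; lia. Qed.

Definition f1 (X : ssSet) (x : X 0) n (a : simplex X n) : simplex X n.+1 :=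
  fun d z => if miss z n.-1 then a d (mon_comp (sigm n) z) else cst x d.

Lemma sphere_nat (X : ssSet) n (x : X 0) (a : simplex X n) : sphere x a -> natural a.
Proof. by case=> [[H _] _] d e al w; apply: H. Qed.

Lemma f1_miss (X : ssSet) (x : X 0) n (a : simplex X n) d (z : Mon d n.+1) i :
  sphere x a -> i <= n.+1 -> i != n.-1 -> miss z i -> f1 x a z = cst x d.
Proof.
move=> ha hi hin hm; rewrite /f1; case: ifP => // hm1.
case: ha => _ H; apply: H; apply: (@bdryI _ _ _ (i - (n.-1 < i))); first lia.
apply: missI => j; rewrite compE sigmE.
have := missP hm j; have := missP hm1 j; lia.
Qed.

Lemma f1_nat (X : ssSet) (x : X 0) n (a : simplex X n) d e (al : Mon e d) (z : Mon d n.+1) :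
  is_simplicial X -> sphere x a -> horn n.+1 z -> f1 x a (mon_comp z al) = sact al (f1 x a z).
Proof.
move=> hS ha hz; rewrite /f1.
case: (boolP (miss z n.-1)) => hm.
  have -> : miss (mon_comp z al) n.-1.
    by apply: missI => j; rewrite compE; apply: missP.
  by rewrite comp_assoc (sphere_nat ha).
rewrite cst_nat //; case: ifP => // hm2.
have [v [hv hvk hmv]] := hornE hz.
have hvn : v != n.-1 by apply/negP => /eqP E; move: hm; rewrite -E hmv.
rewrite -(f1_miss (z := mon_comp z al) ha hv hvn) ?/f1 ?hm2 //.
by apply: missI => j; rewrite compE; apply: missP.
Qed.

Lemma f1_cst (X : ssSet) (x : X 0) n (a : simplex X n) d (z : Mon d n.+1) :
  sphere x a -> d < n -> f1 x a z = cst x d.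
Proof. by move=> ha hd; rewrite /f1; case: ifP => // _; apply: sphere_cst. Qed.

Lemma smap_of (X : ssSet) (x : X 0) mm n N k (s : simplex X N) :
  is_strat X -> (forall d (t : X d), mm <= d -> sthin t) -> mm <= n -> 0 < N -> k <= N ->
  natural s -> (forall d w, d < n -> s d w = cst x d) -> is_smap (DeltaK N k) X s.
Proof.
move=> hX hth hmn hN hk hnat hc; split; first by move=> d e al w; apply: hnat.
move=> d y hy; case: (leqP mm d) => hd; first exact: hth.
rewrite hc; last lia.
apply: cst_thin => //; case: d y hy hd => // y hy _.
by case: (noThin0 hN hk hy).
Qed.

Lemma sphere_of (X : ssSet) (x : X 0) mm n (s : simplex X n) :
  is_strat X -> (forall d (t : X d), mm <= d -> sthin t) -> mm <= n ->
  natural s -> (forall d w, d < n -> s d w = cst x d) ->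
  (forall d (w : Mon d n) i, i <= n -> miss w i -> s d w = cst x d) -> sphere x s.
Proof.
move=> hX hth hmn hnat hc hb; split.
  split; first by move=> d e al w; apply: hnat.
  move=> d y hy; case: (leqP mm d) => hd; first exact: hth.
  rewrite hc; last lia.
  by apply: cst_thin => //; apply: deg_pos hy.
move=> d w [i hi]; apply: (hb _ _ i); first by have := ltn_ord i; lia.
apply: missI => j; apply/negP => /eqP E; move: (hi j); rewrite (_ : monf w j = i) ?eqxx //.
exact: ord_inj.
Qed.

Lemma part1 (X : ssSet) (x : X 0) mm n (a : simplex X n) :
  is_strat X -> weak_complicial X -> (forall d (s : X d), mm <= d -> sthin s) ->
  1 <= mm -> mm <= n -> sphere x a ->
  exists th : simplex X n.+1, [/\ natural th, (forall d w, d < n -> th d w = cst x d),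
   (forall d w, miss w n.-1 -> th d w = a d (mon_comp (sigm n) w)),
   (forall d w i, i <= n -> i != n.-1 -> miss w i -> th d w = cst x d) &
   (forall d w i, i <= n -> miss w i -> miss w n.+1 -> th d w = cst x d)].
Proof.
move=> hX hW hth h1 h2 ha.
have hS : is_simplicial X by case: hX.
have [g [gnat gh gc]] := @fill X x mm n n.+1 n.+1 (f1 x a) hX hW hth h1 h2 (ltnSn n) (leqnn _)
  (fun d e al z hz => f1_nat al hS ha hz)
  (fun d z hd => f1_cst z ha hd).
exists g; split => //.
- move=> d w hm; rewrite gh; first by rewrite /f1 hm.
  by apply: (@hornI _ _ _ w n.-1) => //; lia.
- move=> d w i hi hin hm; rewrite gh; first exact: (f1_miss ha (leqW hi) hin hm).
  by apply: (@hornI _ _ _ w i) => //; lia.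
- move=> d w i hi hm hm'; rewrite gh; first by apply: (f1_miss (i := n.+1) ha) => //; lia.
  by apply: (@hornI _ _ _ w i) => //; lia.
Qed.

Lemma faceCE n i m (y : Mon m n) j : i <= n.+1 ->
  nat_of_ord (monf (mon_comp (faceMon (inord i : 'I_n.+2)) y) j) = bump i (monf y j).
Proof. by move=> h; rewrite compE faceIE. Qed.

Lemma miss_face n i m (y : Mon m n) : i <= n.+1 -> miss (mon_comp (faceMon (inord i : 'I_n.+2)) y) i.
Proof. by move=> h; apply: missI => j; rewrite faceCE //; rewrite /bump; lia. Qed.

Lemma unit_eq (X : ssSet) n (x : X 0) (s : simplex X n) :
  (forall m y, s m y = cst x m) -> hequiv x s (tau_unit x).
Proof.
move=> H; have -> : s = tau_unit x.
  apply: functional_extensionality_dep => m; apply: functional_extensionality => y; exact: H.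
exact: rst_refl.
Qed.

Lemma part1_mul (X : ssSet) (x : X 0) mm n (a : simplex X n) (th : simplex X n.+1) :
  is_strat X -> (forall d (s : X d), mm <= d -> sthin s) -> 1 <= mm -> mm <= n ->
  natural th -> (forall d w, d < n -> th d w = cst x d) ->
  (forall d w, miss w n.-1 -> th d w = a d (mon_comp (sigm n) w)) ->
  (forall d w i, i <= n -> i != n.-1 -> miss w i -> th d w = cst x d) ->
  (forall d w i, i <= n -> miss w i -> miss w n.+1 -> th d w = cst x d) ->
  sphere x (face th n.+1) /\ tau_mul_eq x a (face th n.+1) (tau_unit x).
Proof.
move=> hX hth h1 h2 tnat tc ta tm te.
split.
  apply: (sphere_of hX hth h2).
  - by move=> d e al w; rewrite /face comp_assoc tnat.
  - by move=> d w hd; apply: tc.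
  - move=> d w i hi hm; apply: (te _ _ i hi); last exact: miss_face.
    by apply: missI => j; rewrite faceCE // /bump; have := missP hm j; have := ltn_ord (monf w j); lia.
exists th; split.
- exact: (@smap_of X x mm n n.+1 n th hX hth h2 (ltn0Sn _) (leqnSn _) tnat tc).
- move=> d y; rewrite /face ta; last by apply: miss_face; lia.
  congr (a d); apply: mon_ext => j; rewrite compE sigmE faceCE; last lia.
  rewrite /bump; have := ltn_ord (monf y j); lia.
- by [].
- move=> i hi hin d y; rewrite /face; apply: (tm _ _ i); last (apply: miss_face => //).
  + move: hin; rewrite !inE; lia.
  + move: hin; rewrite !inE; lia.
- apply: unit_eq => d y; rewrite /face; apply: (tm _ _ n) => //; first lia.
  exact: miss_face.
Qed.

Definition tau0 n : Mon n.+2 n.+1 := gmon n.+2 n.+1 (fun j => j - (n.-1 < j)).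
Definition rho1 n : Mon n.+2 n := gmon n.+2 n (fun j => minn (minn j n.-1 + (n.+1 < j)) n).
Definition rho2 n : Mon n.+2 n := gmon n.+2 n (fun j => minn (minn j n.-1 + (n.-1 < j)) n).

Lemma tau0E n j : nat_of_ord (monf (tau0 n) j) = j - (n.-1 < j).
Proof. rewrite gmonE // => *; have := ltn_ord j; lia. Qed.
Lemma rho1E n j : nat_of_ord (monf (rho1 n) j) = minn (minn j n.-1 + (n.+1 < j)) n.
Proof. by rewrite gmonE // => *; lia. Qed.
Lemma rho2E n j : nat_of_ord (monf (rho2 n) j) = minn (minn j n.-1 + (n.-1 < j)) n.
Proof. by rewrite gmonE // => *; lia. Qed.

Definition missB d n (z : Mon d n.+2) : bool := [exists v : 'I_n.+3, (v < n.-1) && miss z v].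

Definition f2 (X : ssSet) (x : X 0) n (a : simplex X n) (th : simplex X n.+1) : simplex X n.+2 :=
  fun d z => if missB z then cst x d
             else if miss z n.-1 then th d (mon_comp (tau0 n) z)
             else if miss z n then a d (mon_comp (rho1 n) z)
             else if miss z n.+1 then a d (mon_comp (rho2 n) z)
             else cst x d.

Lemma missC d e N (z : Mon d N) (al : Mon e d) v : miss z v -> miss (mon_comp z al) v.
Proof. by move=> h; apply: missI => j; rewrite compE; apply: missP. Qed.

Lemma missBE d n (z : Mon d n.+2) : missB z -> exists v, v < n.-1 /\ miss z v.
Proof. by case/existsP => v /andP [h1 h2]; exists v. Qed.

Lemma missBI d n (z : Mon d n.+2) v : v < n.-1 -> miss z v -> missB z.
Proof. move=> h1 h2; apply/existsP; exists (inord v); rewrite inordV ?h1 //; lia. Qed.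



Lemma sph_miss (X : ssSet) (x : X 0) n (a : simplex X n) d (w : Mon d n) v :
  sphere x a -> v <= n -> miss w v -> a d w = cst x d.
Proof. by case=> _ H hv hm; apply: H; apply: bdryI hv hm. Qed.

Lemma CB (X : ssSet) (x : X 0) n (a : simplex X n) (th : simplex X n.+1) d (z : Mon d n.+2) :
  1 <= n -> sphere x a ->
  (forall d w i, i <= n -> i != n.-1 -> miss w i -> th d w = cst x d) ->
  missB z -> [/\ th d (mon_comp (tau0 n) z) = cst x d,
                 a d (mon_comp (rho1 n) z) = cst x d &
                 a d (mon_comp (rho2 n) z) = cst x d].
Proof.
move=> hn ha tm /missBE [v [hv hm]]; split.
- apply: (tm _ _ v); try lia.
  by apply: missI => j; rewrite compE tau0E; have := missP hm j; lia.
- apply: (sph_miss (v := v) ha); first lia.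
  by apply: missI => j; rewrite compE rho1E; have := missP hm j; lia.
- apply: (sph_miss (v := v) ha); first lia.
  by apply: missI => j; rewrite compE rho2E; have := missP hm j; lia.
Qed.

Lemma LB (X : ssSet) (x : X 0) n (a : simplex X n) (th : simplex X n.+1) d (z : Mon d n.+2) :
  missB z -> f2 x a th z = cst x d.
Proof. by rewrite /f2 => ->. Qed.

Lemma L0 (X : ssSet) (x : X 0) n (a : simplex X n) (th : simplex X n.+1) d (z : Mon d n.+2) :
  1 <= n -> sphere x a ->
  (forall d w i, i <= n -> i != n.-1 -> miss w i -> th d w = cst x d) ->
  miss z n.-1 -> f2 x a th z = th d (mon_comp (tau0 n) z).
Proof.
move=> hn ha tm hm; rewrite /f2; case: ifP => hB; last by rewrite hm.
by case: (CB hn ha tm hB).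
Qed.

Lemma L1 (X : ssSet) (x : X 0) n (a : simplex X n) (th : simplex X n.+1) d (z : Mon d n.+2) :
  1 <= n -> sphere x a ->
  (forall d w, miss w n.-1 -> th d w = a d (mon_comp (sigm n) w)) ->
  (forall d w i, i <= n -> i != n.-1 -> miss w i -> th d w = cst x d) ->
  miss z n -> f2 x a th z = a d (mon_comp (rho1 n) z).
Proof.
move=> hn ha ta tm hm; rewrite /f2; case: ifP => hB; first by case: (CB hn ha tm hB).
rewrite hm; case: ifP => // h0.
rewrite ta; last by apply: missI => j; rewrite compE tau0E; have := missP hm j; have := missP h0 j; lia.
congr (a d); apply: mon_ext => j; rewrite compE sigmE !compE tau0E rho1E.
have := missP hm j; have := missP h0 j; have := ltn_ord (monf z j); lia.
Qed.

Lemma L2 (X : ssSet) (x : X 0) n (a : simplex X n) (th : simplex X n.+1) d (z : Mon d n.+2) :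
  1 <= n -> sphere x a ->
  (forall d w i, i <= n -> i != n.-1 -> miss w i -> th d w = cst x d) ->
  miss z n.+1 -> f2 x a th z = a d (mon_comp (rho2 n) z).
Proof.
move=> hn ha tm hm; rewrite /f2; case: ifP => hB; first by case: (CB hn ha tm hB).
case: ifP => h0.
  rewrite (tm _ _ n) //; try lia.
    symmetry; apply: (sph_miss (v := n.-1) ha); first lia.
    by apply: missI => j; rewrite compE rho2E; have := missP hm j; have := missP h0 j; lia.
  by apply: missI => j; rewrite compE tau0E; have := missP hm j; have := missP h0 j; lia.
case: ifP => h1; last by rewrite hm.
congr (a d); apply: mon_ext => j; rewrite !compE rho1E rho2E.
have := missP hm j; have := missP h1 j; have := ltn_ord (monf z j); lia.
Qed.

Lemma f2_nat (X : ssSet) (x : X 0) n (a : simplex X n) (th : simplex X n.+1) d e (al : Mon e d) (z : Mon d n.+2) :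
  is_simplicial X -> 1 <= n -> sphere x a -> natural th ->
  (forall d w, miss w n.-1 -> th d w = a d (mon_comp (sigm n) w)) ->
  (forall d w i, i <= n -> i != n.-1 -> miss w i -> th d w = cst x d) ->
  horn n.+2 z -> f2 x a th (mon_comp z al) = sact al (f2 x a th z).
Proof.
move=> hS hn ha tnat ta tm /hornE [v [hv hvk hm]].
have hmc := missC al hm.
case: (ltnP v n.-1) => hv1.
  by rewrite !LB ?cst_nat //; apply: (missBI hv1).
case: (ltnP n.-1 v) => hv2; last first.
  have E : v = n.-1 by lia. rewrite E in hm hmc.
  by rewrite !(L0 hn ha tm) // comp_assoc tnat.
case: (ltnP n v) => hv3; last first.
  have E : v = n by lia. rewrite E in hm hmc.
  by rewrite !(L1 hn ha ta tm) // comp_assoc (sphere_nat ha).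
have E : v = n.+1 by lia. rewrite E in hm hmc.
by rewrite !(L2 hn ha tm) // comp_assoc (sphere_nat ha).
Qed.

Lemma f2_cst (X : ssSet) (x : X 0) n (a : simplex X n) (th : simplex X n.+1) d (z : Mon d n.+2) :
  sphere x a -> (forall d w, d < n -> th d w = cst x d) -> d < n -> f2 x a th z = cst x d.
Proof.
move=> ha tc hd; rewrite /f2.
by case: ifP => // _; case: ifP => [_|_]; [exact: tc|]; case: ifP => [_|_];
  [exact: sphere_cst|]; case: ifP => [_|_] //; exact: sphere_cst.
Qed.

Lemma part2 (X : ssSet) (x : X 0) mm n (a : simplex X n) (th : simplex X n.+1) :
  is_strat X -> weak_complicial X -> (forall d (s : X d), mm <= d -> sthin s) ->
  1 <= mm -> mm <= n -> sphere x a ->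
  natural th -> (forall d w, d < n -> th d w = cst x d) ->
  (forall d w, miss w n.-1 -> th d w = a d (mon_comp (sigm n) w)) ->
  (forall d w i, i <= n -> i != n.-1 -> miss w i -> th d w = cst x d) ->
  tau_mul_eq x (face th n.+1) a (tau_unit x).
Proof.
move=> hX hW hth h1 h2 ha tnat tc ta tm.
have hS : is_simplicial X by case: hX.
have hn : 1 <= n by lia.
have [g [gnat gh gc]] := @fill X x mm n n.+2 n.+2 (f2 x a th) hX hW hth h1 h2 (ltac:(lia)) (leqnn _)
  (fun d e al z hz => f2_nat al hS hn ha tnat ta tm hz)
  (fun d z hd => f2_cst z ha tc hd).
have gface : forall i, i <= n.+1 -> forall d (y : Mon d n),
    face (face g n.+2) i d y = f2 x a th (mon_comp (faceMon (inord n.+2 : 'I_n.+3)) (mon_comp (faceMon (inord i : 'I_n.+2)) y)).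
  move=> i hi d y; rewrite /face gh //; apply: (@hornI _ _ _ _ i); [lia | lia | ].
  apply: missI => j; rewrite faceCE // faceCE //; rewrite /bump.
  have := ltn_ord (monf y j); lia.
have hm : forall i, i <= n.+1 -> forall d (y : Mon d n),
    miss (mon_comp (faceMon (inord n.+2 : 'I_n.+3)) (mon_comp (faceMon (inord i : 'I_n.+2)) y)) i.
  move=> i hi d y; apply: missI => j; rewrite faceCE // faceCE //; rewrite /bump.
  have := ltn_ord (monf y j); lia.
exists (face g n.+2); split.
- apply: (@smap_of X x mm n n.+1 n _ hX hth h2 (ltn0Sn _) (leqnSn _)).
    by move=> d e al w; rewrite /face comp_assoc gnat.
  by move=> d w hd; rewrite /face gc.
- move=> d y; rewrite gface; last lia.
  rewrite (L0 hn ha tm); last by apply: hm; lia.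
  rewrite /face; congr (th d); apply: mon_ext => j.
  rewrite compE tau0E !faceCE; try lia.
  rewrite /bump; have := ltn_ord (monf y j); lia.
- move=> d y; rewrite gface // (L2 hn ha tm); last by apply: hm.
  congr (a d); apply: mon_ext => j.
  rewrite compE rho2E !faceCE; try lia.
  rewrite /bump; have := ltn_ord (monf y j); lia.
- move=> i hi hin d y; rewrite gface // LB //.
  apply: (missBI (v := i)); last exact: hm.
  move: hin; rewrite !inE; lia.
- apply: unit_eq => d y; rewrite gface; last lia.
  rewrite (L1 hn ha ta tm); last by apply: hm; lia.
  apply: (sph_miss (v := n) ha) => //.
  apply: missI => j; rewrite compE rho1E !faceCE; try lia.
  rewrite /bump; have := ltn_ord (monf y j); lia.
Qed.

Theorem mainTheorem6 (X : ssSet) (m : nat) (x : X 0) :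
  1 <= m -> is_strat X -> weak_complicial X ->
  (forall k (s : X k), m <= k -> sthin s) ->
  forall n, m <= n -> tau_is_group n x.
Proof.
move=> h1 hX hW hth n hn a ha.
have [th [tnat tc ta tm te]] := part1 hX hW hth h1 hn ha.
have [hb hab] := part1_mul hX hth h1 hn tnat tc ta tm te.
exists (face th n.+1); split => //.
exact: (part2 hX hW hth h1 hn ha tnat tc ta tm).
Qed.
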